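(* As formal power series in $y$, \[ \sum_{n\ge0}H_n(x)y^n=\frac{2+y}{1-xy^2(1+y)}-(1-x)y-1, \] and the $(1,2,3)$-Padovan numbers satisfy \[ \sum_{n\ge0}p'_ny^n=\frac{1+2y+2y^2}{1-y^2-y^3}. \]
   Context: For $n\ge1$ let $\Xi_n$ be the poset on $\{x_1,\dots,x_n\}$ whose cover relations are exactly: $x_2\prec x_1$, $x_3\prec x_2$, and for $3\le i\le n-1$, $x_i\prec x_{i+1}$ if $i$ is odd and $x_{i+1}\prec x_i$ if $i$ is even (so $x_1>x_2>x_3<x_4>x_5<\cdots$). A filter of a poset is an up-closed subset. The matchable Lucas cube $\Omega_n$ is the graph whose vertices are the filters of $\Xi_n$, two filters adjacent iff one is obtained from the other by deleting a single element; $\Omega_0$ is the one-vertex graph. $h_{n,k}$ is the number of maximal induced $k$-dimensional hypercubes in $\Omega_n$ (induced $k$-cubes not contained in an induced $(k+1)$-cube), and $H_n(x)=\sum_{k\ge0}h_{n,k}x^k$ is the maximal cube polynomial. The $(1,2,3)$-Padovan numbers are $p'_0=1$, $p'_1=2$, $p'_2=3$, $p'_n=p'_{n-2}+p'_{n-3}$ for $n\ge3$. *)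

(* Defs.v *)
From mathcomp Require Import all_boot all_order all_algebra.
Set Implicit Arguments. Unset Strict Implicit. Unset Printing Implicit Defensive.
Import GRing.Theory.

(* Element x_{i+1} of Xi_n is represented by i : 'I_n (0-indexed).
   [covers a b] means x_{a+1} is covered by x_{b+1}  (x_{a+1} < x_{b+1}).
   Covers: x2 < x1, x3 < x2, and for 3 <= i <= n-1 (1-indexed):
   x_i < x_{i+1} if i odd, x_{i+1} < x_i if i even.  With j = i-1 (0-indexed,
   2 <= j): j even gives covers j j+1, j odd gives covers j+1 j. *)
Definition covers (a b : nat) : bool :=
  [|| (a == 1) && (b == 0),
      (a == 2) && (b == 1),
      [&& 2 <= a, b == a.+1 & ~~ odd a]
    | [&& 2 <= b, a == b.+1 & odd b]].

Definition Xi_le (n : nat) (a b : 'I_n) : bool :=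
  connect (fun u v : 'I_n => covers u v) a b.

Definition isFilter (n : nat) (F : {set 'I_n}) : bool :=
  [forall a : 'I_n, forall b : 'I_n, ((a \in F) && Xi_le a b) ==> (b \in F)].

(* vertices: filters of Xi_n; adjacency: one is the other minus one element *)
Definition Omega_adj (n : nat) (A B : {set 'I_n}) : bool :=
  [exists a : 'I_n, (a \in A) && (B == A :\ a)] ||
  [exists a : 'I_n, (a \in B) && (A == B :\ a)].

Definition cube_adj (k : nat) (u v : {ffun 'I_k -> bool}) : bool :=
  #|[set i | u i != v i]| == 1.

Definition isInducedCube (n k : nat) (S : {set {set 'I_n}}) : bool :=
  [forall A in S, isFilter A] &&
  [exists f : {ffun {ffun 'I_k -> bool} -> {set 'I_n}},
     [&& injectiveb f, S == [set f u | u : {ffun 'I_k -> bool}] &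
         [forall u, forall v, Omega_adj (f u) (f v) == cube_adj u v]]].

Definition isMaximalCube (n k : nat) (S : {set {set 'I_n}}) : bool :=
  @isInducedCube n k S &&
  ~~ [exists T : {set {set 'I_n}}, @isInducedCube n k.+1 T && (S \subset T)].

Definition h (n k : nat) : nat := #|[set S : {set {set 'I_n}} | @isMaximalCube n k S]|.

Fixpoint padovan (n : nat) : nat :=
  match n with
  | 0 => 1
  | 1 => 2
  | 2 => 3
  | (S m as p).+2 => padovan p + padovan m
  end.

Definition fps := nat -> int.
Definition fps_const (c : int) : fps := fun n => if n == 0 then c else 0%R.
Definition fps_X : fps := fun n => if n == 1 then 1%R else 0%R.
Definition fps_add (f g : fps) : fps := fun n => (f n + g n)%R.
Definition fps_sub (f g : fps) : fps := fun n => (f n - g n)%R.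
Definition fps_mul (f g : fps) : fps :=
  fun n => (\sum_(i < n.+1) f i * g (n - i)%N)%R.

(* bivariate formal power series in (y, x): f n k = coefficient of y^n x^k *)
Definition fps2 := nat -> nat -> int.
Definition fps2_const (c : int) : fps2 :=
  fun n k => if (n == 0) && (k == 0) then c else 0%R.
Definition fps2_Y : fps2 := fun n k => if (n == 1) && (k == 0) then 1%R else 0%R.
Definition fps2_X : fps2 := fun n k => if (n == 0) && (k == 1) then 1%R else 0%R.
Definition fps2_add (f g : fps2) : fps2 := fun n k => (f n k + g n k)%R.
Definition fps2_sub (f g : fps2) : fps2 := fun n k => (f n k - g n k)%R.
Definition fps2_mul (f g : fps2) : fps2 :=
  fun n k => (\sum_(i < n.+1) \sum_(j < k.+1) f i j * g (n - i)%N (k - j)%N)%R.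

(* sum_{n>=0} H_n(x) y^n, with H_n(x) = sum_k h_{n,k} x^k *)
Definition Hser : fps2 := fun n k => ((h n k)%:Z)%R.
Definition Pser : fps := fun n => ((padovan n)%:Z)%R.

(* Main.v *)
Require Import Defs.
From mathcomp Require Import all_boot all_order all_algebra zify ring.
Set Implicit Arguments. Unset Strict Implicit. Unset Printing Implicit Defensive.

Definition cu (j : nat) : bool := (2 <= j) && ~~ odd j.
Definition cd (j : nat) : bool := (j <= 1) || odd j.

Section G.
Variables (cu cd : nat -> bool) (x : nat -> bool) (n : nat).
Definition upG j := ((j.+1 < n) && cu j ==> x j.+1) && ((0 < j) && cd j.-1 ==> x j.-1).
Definition lowG j := ((j.+1 < n) && cd j ==> ~~ x j.+1) && ((0 < j) && cu j.-1 ==> ~~ x j.-1).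
Definition addG j := ~~ x j && upG j.
Definition condG j := (x j ==> upG j) &&
  (x j ==> lowG j ==> ((j.+1 < n) && cd j && addG j.+1) || ((0 < j) && cu j.-1 && addG j.-1)).
End G.

Definition goodL (l : seq bool) := all (condG cu cd (nth false l) (size l)) (iota 0 (size l)).
Definition wtL (l : seq bool) := count (addG cu cd (nth false l) (size l)) (iota 0 (size l)).

Fixpoint lists n : seq (seq bool) :=
  if n is m.+1 then map (rcons^~ false) (lists m) ++ map (rcons^~ true) (lists m) else [:: [::]].


Lemma upG_loc cu cd x y n m N j : (forall i, i < N -> x i = y i) -> j.+1 < N -> N <= n -> N <= m ->
  upG cu cd x n j = upG cu cd y m j.
Proof.
move=> Hxy hj hn hm; rewrite /upG.
have -> : (j.+1 < n) = true by apply: leq_trans hj hn.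
have -> : (j.+1 < m) = true by apply: leq_trans hj hm.
rewrite (Hxy j.+1) // (Hxy j.-1) //; exact: leq_ltn_trans (leq_pred j) (ltnW hj).
Qed.

Lemma lowG_loc cu cd x y n m N j : (forall i, i < N -> x i = y i) -> j.+1 < N -> N <= n -> N <= m ->
  lowG cu cd x n j = lowG cu cd y m j.
Proof.
move=> Hxy hj hn hm; rewrite /lowG.
have -> : (j.+1 < n) = true by apply: leq_trans hj hn.
have -> : (j.+1 < m) = true by apply: leq_trans hj hm.
rewrite (Hxy j.+1) // (Hxy j.-1) //; exact: leq_ltn_trans (leq_pred j) (ltnW hj).
Qed.

Lemma addG_loc cu cd x y n m N j : (forall i, i < N -> x i = y i) -> j.+1 < N -> N <= n -> N <= m ->
  addG cu cd x n j = addG cu cd y m j.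
Proof.
move=> Hxy hj hn hm; rewrite /addG (upG_loc _ _ Hxy hj hn hm) Hxy //; exact: ltnW.
Qed.

Lemma condG_loc cu cd x y n m N j : (forall i, i < N -> x i = y i) -> j.+2 < N -> N <= n -> N <= m ->
  condG cu cd x n j = condG cu cd y m j.
Proof.
move=> Hxy hj hn hm; have hj1 : j.+1 < N by apply: ltnW.
rewrite /condG (upG_loc _ _ Hxy hj1 hn hm) (lowG_loc _ _ Hxy hj1 hn hm).
rewrite (addG_loc _ _ Hxy hj hn hm) (addG_loc (j := j.-1) _ _ Hxy _ hn hm); last first.
  by case: j hj hj1 => //= j _ h; apply: ltnW.
have -> : (j.+1 < n) = true by apply: leq_trans hj1 hn.
have -> : (j.+1 < m) = true by apply: leq_trans hj1 hm.
by rewrite Hxy //; apply: ltnW.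
Qed.

Section Shift.
Variables (cu cd x : nat -> bool) (cu' cd' x' : nat -> bool) (n s : nat).
Hypotheses (Hu : forall i, cu (s + i) = cu' i) (Hd : forall i, cd (s + i) = cd' i)
  (Hx : forall i, x (s + i) = x' i).

Lemma upG_shift k : 0 < k -> upG cu cd x n (s + k) = upG cu' cd' x' (n - s) k.
Proof.
case: k => // k _; rewrite /upG -addnS ltn_subRL Hu Hx.
have -> : (s + k.+1).-1 = s + k by rewrite addnS.
by rewrite Hd Hx addn_gt0 orbT.
Qed.

Lemma lowG_shift k : 0 < k -> lowG cu cd x n (s + k) = lowG cu' cd' x' (n - s) k.
Proof.
case: k => // k _; rewrite /lowG -addnS ltn_subRL Hd Hx.
have -> : (s + k.+1).-1 = s + k by rewrite addnS.
by rewrite Hu Hx addn_gt0 orbT.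
Qed.

Lemma addG_shift k : 0 < k -> addG cu cd x n (s + k) = addG cu' cd' x' (n - s) k.
Proof. by move=> hk; rewrite /addG upG_shift // Hx. Qed.

Lemma condG_shift k : 1 < k -> condG cu cd x n (s + k) = condG cu' cd' x' (n - s) k.
Proof.
case: k => // -[|k] // _.
rewrite /condG upG_shift // lowG_shift // -addnS ltn_subRL Hd.
have -> : (s + k.+2).-1 = s + k.+1 by rewrite addnS.
by rewrite addG_shift // Hu addG_shift // Hx addn_gt0 orbT.
Qed.
End Shift.

Definition cuP (o : bool) (i : nat) := ~~ (o (+) odd i).
Definition cdP (o : bool) (i : nat) := o (+) odd i.

Lemma cu_shift s i : 2 <= s -> cu (s + i) = cuP (odd s) i.
Proof. by move=> hs; rewrite /cu /cuP oddD (leq_trans hs (leq_addr _ _)). Qed.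

Lemma cd_shift s i : 2 <= s -> cd (s + i) = cdP (odd s) i.
Proof.
move=> hs; rewrite /cd /cdP oddD.
by have -> : (s + i <= 1) = false by apply/negbTE; rewrite -ltnNge (leq_trans hs (leq_addr _ _)).
Qed.

Definition Ppre (l0 v : seq bool) :=
  all (condG cu cd (nth false (l0 ++ v)) (size (l0 ++ v))) (iota 0 (size l0 + 2)).
Definition Wpre (l0 v : seq bool) :=
  count (addG cu cd (nth false (l0 ++ v)) (size (l0 ++ v))) (iota 0 (size l0 + 2)).
Definition Ttail o (u : seq bool) := all (condG (cuP o) (cdP o) (nth false u) (size u)) (iota 2 (size u - 2)).
Definition Wtail o (u : seq bool) := count (addG (cuP o) (cdP o) (nth false u) (size u)) (iota 2 (size u - 2)).

Lemma nth_pre (l0 v t : seq bool) i : i < size (l0 ++ v) ->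
  nth false (l0 ++ v ++ t) i = nth false (l0 ++ v) i.
Proof. by move=> hi; rewrite catA nth_cat hi. Qed.

Lemma goodL_tail l0 v t : 2 <= size l0 -> size v = 4 ->
  goodL (l0 ++ v ++ t) = Ppre l0 v && Ttail (odd (size l0)) (v ++ t).
Proof.
move=> hs hv; rewrite /goodL /Ppre /Ttail !size_cat hv.
have -> : size l0 + (4 + size t) = size l0 + 2 + (2 + size t) by rewrite -!addnA.
rewrite iotaD all_cat; congr andb.
  apply: eq_in_all => j; rewrite mem_iota add0n => /andP[_ hj].
  apply: (@condG_loc cu cd _ _ _ _ (size l0 + 4)).
  - by move=> i hi; apply: nth_pre; rewrite size_cat hv.
  - lia.
  - lia.
  - by rewrite ?size_cat ?hv.
rewrite add0n iotaDl all_map; have -> : 4 + size t - 2 = 2 + size t by rewrite addSn addSn subn2.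
apply: eq_in_all => k; rewrite mem_iota => /andP[hk _] /=.
have -> : 4 + size t = size l0 + 2 + (2 + size t) - size l0 by lia.
apply: (@condG_shift cu cd _ (cuP (odd (size l0))) (cdP (odd (size l0))) (nth false (v ++ t)) _ (size l0)) => // i.
- exact: cu_shift.
- exact: cd_shift.
by rewrite nth_cat ltnNge leq_addr /= addKn.
Qed.

Lemma wtL_tail l0 v t : 2 <= size l0 -> size v = 4 ->
  wtL (l0 ++ v ++ t) = Wpre l0 v + Wtail (odd (size l0)) (v ++ t).
Proof.
move=> hs hv; rewrite /wtL /Wpre /Wtail !size_cat hv.
have -> : size l0 + (4 + size t) = size l0 + 2 + (2 + size t) by rewrite -!addnA.
rewrite iotaD count_cat; congr addn.
  apply: eq_in_count => j; rewrite mem_iota add0n => /andP[_ hj].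
  apply: (@addG_loc cu cd _ _ _ _ (size l0 + 4)).
  - by move=> i hi; apply: nth_pre; rewrite size_cat hv.
  - lia.
  - lia.
  - by rewrite ?size_cat ?hv.
rewrite add0n iotaDl count_map; have -> : 4 + size t - 2 = 2 + size t by rewrite addSn addSn subn2.
apply: eq_in_count => k; rewrite mem_iota => /andP[hk _] /=.
have -> : 4 + size t = size l0 + 2 + (2 + size t) - size l0 by lia.
apply: (@addG_shift cu cd _ (cuP (odd (size l0))) (cdP (odd (size l0))) (nth false (v ++ t)) _ (size l0)); last by lia.
- by move=> i; exact: cu_shift.
- by move=> i; exact: cd_shift.
by move=> i; rewrite nth_cat ltnNge leq_addr /= addKn.
Qed.

Definition s2 (o : bool) := if o then [:: false; false] else [:: true; false].
Definition s3 (o : bool) := if o then [:: true; false; true] else [:: false; false; false].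

Lemma tail_key (P : bool) (W k : nat) o a b c d p q r :
  (P && Ttail o [:: a; b; c; d; p; q; r]) && (W + Wtail o [:: a; b; c; d; p; q; r] == k.+1) =
  if [:: q; r] == s2 o then (P && Ttail o [:: a; b; c; d; p]) && (W + Wtail o [:: a; b; c; d; p] == k)
  else if [:: p; q; r] == s3 o then (P && Ttail o [:: a; b; c; d]) && (W + Wtail o [:: a; b; c; d] == k)
  else false.
Proof.
case: o; case: a; case: b; case: c; case: d; case: p; case: q; case: r;
  rewrite /Ttail /Wtail /= ?andbF ?andbT ?addn0 ?addn1 ?addn2 ?addn3 ?eqSS //.
Qed.

Lemma mem_lists n l : (l \in lists n) = (size l == n).
Proof.
elim: n l => [|n IH] l /=; first by rewrite inE; case: l.
rewrite mem_cat; case/lastP: l => [|l x]; first by apply/negbTE; rewrite negb_or;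
  apply/andP; split; apply/mapP => -[l' _]; case: l'.
rewrite size_rcons eqSS -IH; case: x.
- rewrite orbC (mem_map (fun l1 l2 => (@rcons_injl _ true l1 l2))).
  by case: (l \in lists n) => //; apply/negbTE; apply/mapP => -[l' _ /eqP]; rewrite eqseq_rcons andbF.
- rewrite (mem_map (fun l1 l2 => (@rcons_injl _ false l1 l2))).
  by case: (l \in lists n) => //; apply/negbTE; apply/mapP => -[l' _ /eqP]; rewrite eqseq_rcons andbF.
Qed.

Lemma uniq_lists n : uniq (lists n).
Proof.
elim: n => [|n IH] //=; rewrite cat_uniq !map_inj_uniq //; try by move=> l1 l2; apply: rcons_injl.
rewrite IH /= andbT; apply/hasPn => l /mapP[l' _ ->]; apply/mapP => -[l'' _ /eqP].
by rewrite eqseq_rcons andbF.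
Qed.

Lemma count_lists_S (P : pred (seq bool)) n :
  count P (lists n.+1) = count (fun l => P (rcons l false)) (lists n) + count (fun l => P (rcons l true)) (lists n).
Proof. by rewrite /= count_cat !count_map. Qed.

Definition Pk k (l : seq bool) := goodL l && (wtL l == k).
Definition G n k := count (Pk k) (lists n).

Lemma step_l n k l p q r : 4 <= n -> size l = n.+2 ->
  Pk k.+1 (l ++ [:: p; q; r]) =
  if [:: q; r] == s2 (odd n) then Pk k (l ++ [:: p])
  else if [:: p; q; r] == s3 (odd n) then Pk k l else false.
Proof.
move=> hn hl.
have [l0 [a [b [c [d [El hl0]]]]]] : exists l0 a b c d, l = l0 ++ [:: a; b; c; d] /\ size l0 = n - 2.
  exists (take (n - 2) l); move: (cat_take_drop (n - 2) l) (size_drop (n - 2) l).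
  case: (drop (n - 2) l) => [|a [|b [|c [|d [|e v]]]]] /= E; rewrite hl => hs; try lia.
  by exists a, b, c, d; rewrite E size_take hl; split => //; case: ifP => //; lia.
have hs : 2 <= size l0 by lia.
have h2 : 2 <= n by lia.
have ho : odd (size l0) = odd n by rewrite hl0 -{2}(subnK h2) oddD addbF.
have -> : l ++ [:: p] = l0 ++ [:: a; b; c; d] ++ [:: p] by rewrite El -catA.
have -> : l ++ [:: p; q; r] = l0 ++ [:: a; b; c; d] ++ [:: p; q; r] by rewrite El -catA.
rewrite El -[l0 ++ [:: a; b; c; d]]cats0 -catA.
rewrite /Pk !goodL_tail // !wtL_tail // ho /=.
exact: tail_key.
Qed.

Lemma count_lists_add (P : pred (seq bool)) m j :
  count P (lists (m + j)) = \sum_(t <- lists j) count (fun l => P (l ++ t)) (lists m).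
Proof.
elim: j P => [|j IH] P.
  by rewrite addn0 /= big_cons big_nil addn0; apply: eq_count => l; rewrite cats0.
rewrite addnS count_lists_S !IH /= big_cat !big_map /=.
by congr addn; apply: eq_bigr => t _; apply: eq_count => l; rewrite rcons_cat.
Qed.

Lemma count_false (s : seq (seq bool)) : count (fun _ => false) s = 0.
Proof. by elim: s. Qed.

Lemma G_rec n k : 4 <= n -> G (n + 5) k.+1 = G (n + 3) k + G n.+2 k.
Proof.
move=> hn.
have E : forall p q r, count (fun l => Pk k.+1 (l ++ [:: p; q; r])) (lists n.+2) =
  if [:: q; r] == s2 (odd n) then count (fun l => Pk k (l ++ [:: p])) (lists n.+2)
  else if [:: p; q; r] == s3 (odd n) then count (Pk k) (lists n.+2) else 0.
  move=> p q r; rewrite (@eq_in_count _ _ (fun l => if [:: q; r] == s2 (odd n) then Pk k (l ++ [:: p])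
        else if [:: p; q; r] == s3 (odd n) then Pk k l else false)); last first.
    by move=> l; rewrite mem_lists => /eqP hl; apply: step_l.
  by case: ifP => _; [|case: ifP => _; [|apply: count_false]].
rewrite /G (_ : n + 5 = n.+2 + 3); last by rewrite !addnS.
rewrite count_lists_add /= !big_cons big_nil /=.
rewrite !E (_ : n + 3 = n.+2 + 1); last by rewrite !addnS.
rewrite count_lists_add /= !big_cons big_nil /=.
by case: (odd n) => /=; lia.
Qed.

Lemma tail_zero (P : bool) (W : nat) o a b c d p q r :
  (P && Ttail o [:: a; b; c; d; p; q; r]) && (W + Wtail o [:: a; b; c; d; p; q; r] == 0) = false.
Proof.
case: o; case: a; case: b; case: c; case: d; case: p; case: q; case: r;
  rewrite /Ttail /Wtail /= ?andbF ?andbT ?addn0 ?addn1 ?addn2 ?addn3 ?eqSS //. all: by rewrite andbF.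
Qed.

Lemma step0_l n l p q r : 4 <= n -> size l = n.+2 -> Pk 0 (l ++ [:: p; q; r]) = false.
Proof.
move=> hn hl.
have [l0 [a [b [c [d [El hl0]]]]]] : exists l0 a b c d, l = l0 ++ [:: a; b; c; d] /\ size l0 = n - 2.
  exists (take (n - 2) l); move: (cat_take_drop (n - 2) l) (size_drop (n - 2) l).
  case: (drop (n - 2) l) => [|a [|b [|c [|d [|e v]]]]] /= E; rewrite hl => hs; try lia.
  by exists a, b, c, d; rewrite E size_take hl; split => //; case: ifP => //; lia.
have hs : 2 <= size l0 by lia.
have -> : l ++ [:: p; q; r] = l0 ++ [:: a; b; c; d] ++ [:: p; q; r] by rewrite El -catA.
rewrite /Pk goodL_tail // wtL_tail //=.
exact: tail_zero.
Qed.

Lemma G_zero n : 4 <= n -> G (n + 5) 0 = 0.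
Proof.
move=> hn; rewrite /G (_ : n + 5 = n.+2 + 3); last by rewrite !addnS.
rewrite count_lists_add big1_seq // => t; rewrite mem_lists => /andP[_] /eqP ht.
case: t ht => [|p [|q [|r [|? ?]]]] // _.
rewrite (@eq_in_count _ _ (fun _ => false)) ?count_false // => l.
rewrite mem_lists => /eqP hl; exact: (step0_l p q r hn hl).
Qed.

Lemma G_small n k : G n k = count_mem k (map wtL (filter goodL (lists n))).
Proof. rewrite /G count_map count_filter; apply: eq_count => l; by rewrite /Pk /= andbC. Qed.

Lemma G_rec_small n k : n <= 3 -> G (n + 5) k.+1 = G (n + 3) k + G n.+2 k.
Proof.
by case: n => [|[|[|[|n]]]] // _; rewrite !G_small; case: k => [|[|[|[|k]]]]; vm_compute.
Qed.

Lemma G_zero_small n : n <= 3 -> G (n + 5) 0 = 0.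
Proof. by case: n => [|[|[|[|n]]]] // _; rewrite !G_small; vm_compute. Qed.

Lemma G0 k : G 0 k = (k == 0).
Proof. by rewrite G_small; case: k => [|[|[|k]]]; vm_compute. Qed.
Lemma G1 k : G 1 k = (k == 1).
Proof. by rewrite G_small; case: k => [|[|[|k]]]; vm_compute. Qed.
Lemma G2 k : G 2 k = (k == 1) * 2.
Proof. by rewrite G_small; case: k => [|[|[|k]]]; vm_compute. Qed.
Lemma G3 k : G 3 k = (k == 1) * 3.
Proof. by rewrite G_small; case: k => [|[|[|k]]]; vm_compute. Qed.
Lemma G4 k : G 4 k = (k == 1) + (k == 2) * 2.
Proof. by rewrite G_small; case: k => [|[|[|k]]]; vm_compute. Qed.

Lemma G_rec_all n k : G (n + 5) k.+1 = G (n + 3) k + G n.+2 k.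
Proof. by case: (leqP n 3) => h; [apply: G_rec_small | apply: G_rec]. Qed.
Lemma G_zero_all n : G (n + 5) 0 = 0.
Proof. by case: (leqP n 3) => h; [apply: G_zero_small | apply: G_zero]. Qed.

Lemma coversE a b : covers a b = ((b == a.+1) && cu a) || ((a == b.+1) && cd b).
Proof.
rewrite /covers /cu /cd.
case: a => [|[|[|a]]]; case: b => [|[|[|b]]] //=; rewrite ?andbT ?andbF ?orbF //.
Qed.

Lemma up_all (X : nat -> bool) n a : a < n ->
  (forall b, b < n -> covers a b -> X b) <-> upG cu cd X n a.
Proof.
move=> ha; rewrite /upG; split.
  move=> H; apply/andP; split; apply/implyP => /andP[h1 h2]; apply: H => //.
  - by rewrite coversE eqxx h2.
  - by apply: leq_ltn_trans (leq_pred a) ha.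
  - by rewrite coversE; case: a ha h1 h2 => // a _ _ /= ->; rewrite eqxx orbT.
move=> /andP[H1 H2] b hb; rewrite coversE => /orP[/andP[/eqP eb hc]|/andP[/eqP ea hc]].
  by subst b; move/implyP: H1; apply; rewrite hb.
by subst a; move/implyP: H2; apply.
Qed.

Lemma low_all (X : nat -> bool) n a : a < n ->
  (forall c, c < n -> covers c a -> ~~ X c) <-> lowG cu cd X n a.
Proof.
move=> ha; rewrite /lowG; split.
  move=> H; apply/andP; split; apply/implyP => /andP[h1 h2]; apply: H => //.
  - by rewrite coversE eqxx h2 orbT.
  - by apply: leq_ltn_trans (leq_pred a) ha.
  - by rewrite coversE; case: a ha h1 h2 => // a _ _ /= ->; rewrite eqxx.
move=> /andP[H1 H2] c hc; rewrite coversE => /orP[/andP[/eqP ea hcu]|/andP[/eqP ec hcd]].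
  by subst a; move/implyP: H2; apply.
by subst c; move/implyP: H1; apply; rewrite hc.
Qed.

Lemma ex_add (X : nat -> bool) n a : a < n ->
  (exists2 d, d < n & covers d a && addG cu cd X n d) <->
  ((a.+1 < n) && cd a && addG cu cd X n a.+1) || ((0 < a) && cu a.-1 && addG cu cd X n a.-1).
Proof.
move=> ha; split.
  move=> [d hd]; rewrite coversE => /andP[/orP[/andP[/eqP ea hc]|/andP[/eqP ed hc]] hadd].
    by subst a; rewrite hc hadd /= orbT.
  by subst d; rewrite hd hc hadd.
case/orP => [/andP[/andP[h1 h2] h3]|/andP[/andP[h1 h2] h3]].
  by exists a.+1 => //; rewrite coversE eqxx h2 orbT.
exists a.-1; first by apply: leq_ltn_trans (leq_pred a) ha.
by rewrite coversE h3; case: a ha h1 h2 {h3} => // a _ _ /= ->; rewrite eqxx.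
Qed.

Section SetLevel.
Variable n : nat.
Implicit Types A B D X Y : {set 'I_n}.

Definition filt A := [forall a : 'I_n, forall b : 'I_n, (covers a b && (a \in A)) ==> (b \in A)].
Definition AddS A := [set d | (d \notin A) && filt (d |: A)].
Definition cubeok A D := [&& filt A, [disjoint A & D] & [forall d in D, filt (d |: A)]].
Definition cubeset A D : {set {set 'I_n}} := [set X : {set 'I_n} | (A \subset X) && (X \subset A :|: D)].
Definition goodS A := filt A && [forall b, (b \notin AddS A) ==> ~~ cubeok (A :\ b) (b |: AddS A)].
Definition bits A := [seq i \in A | i <- enum 'I_n].

Lemma filtP A : reflect (forall a b : 'I_n, covers a b -> a \in A -> b \in A) (filt A).
Proof.
apply: (iffP forallP) => [H a b cab aA|H a]; first by move/forallP: (H a) => /(_ b); rewrite cab aA.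
by apply/forallP => b; apply/implyP => /andP[]; apply: H.
Qed.

Lemma covers_irr (a : nat) : covers a a = false.
Proof. by rewrite coversE !eqn_leq ltnn !andbF. Qed.

Lemma size_bits A : size (bits A) = n.
Proof. by rewrite size_map size_enum_ord. Qed.

Lemma nth_bits A (i : 'I_n) : nth false (bits A) i = (i \in A).
Proof. by rewrite (nth_map i) ?size_enum_ord // nth_ord_enum. Qed.

Lemma card_count (P : pred nat) : #|[set x : 'I_n | P x]| = count P (iota 0 n).
Proof. by rewrite -sum1dep_card -(big_mkord P (fun _ => 1)) /index_iota subn0 sum1_count. Qed.

Notation Xb A := (nth false (bits A)).

Lemma filt_bits A : filt A = all (fun a => Xb A a ==> upG cu cd (Xb A) n a) (iota 0 n).
Proof.
apply/filtP/allP => [H a|H a b cab aA].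
  rewrite mem_iota add0n => /andP[_ ha]; apply/implyP => Xa.
  apply/(up_all _ ha) => b hb cab.
  by rewrite -[b]/(nat_of_ord (Ordinal hb)) nth_bits; apply: (H (Ordinal ha)); rewrite // -nth_bits.
have := H a; rewrite mem_iota add0n ltn_ord nth_bits aA => /(_ isT) /= /(up_all _ (ltn_ord a)).
by move=> /(_ b (ltn_ord b) cab); rewrite nth_bits.
Qed.

Lemma filtU1 A d : filt A -> filt (d |: A) = [forall e : 'I_n, covers d e ==> (e \in A)].
Proof.
move=> /filtP fA; apply/filtP/forallP => [H e|H a b cab].
  apply/implyP => cde; have := H d e cde (setU11 _ _); rewrite in_setU1 => /orP[/eqP ed|//].
  by subst e; rewrite covers_irr in cde.
rewrite !in_setU1 => /orP[/eqP ad|aA]; last by rewrite (fA a b cab aA) orbT.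
by subst a; move/implyP: (H b) => /(_ cab) ->; rewrite orbT.
Qed.

Lemma AddS_mem A (d : 'I_n) : filt A -> (d \in AddS A) = addG cu cd (Xb A) n d.
Proof.
move=> fA; rewrite inE filtU1 // /addG nth_bits; congr andb.
apply/forallP/idP => [H|H e].
  apply/(up_all _ (ltn_ord d)) => b hb cdb.
  by rewrite -[b]/(nat_of_ord (Ordinal hb)) nth_bits; move/implyP: (H (Ordinal hb)); apply.
apply/implyP => cde; move/(up_all _ (ltn_ord d)): H => /(_ e (ltn_ord e) cde).
by rewrite nth_bits.
Qed.

Lemma card_AddS A : filt A -> #|AddS A| = wtL (bits A).
Proof.
move=> fA; rewrite /wtL size_bits -card_count; apply: eq_card => d.
by rewrite AddS_mem // inE.
Qed.

Lemma filtD1 A a : filt A -> a \in A -> filt (A :\ a) = [forall c : 'I_n, covers c a ==> (c \notin A)].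
Proof.
move=> /filtP fA aA; apply/filtP/forallP => [H c|H x y cxy].
  apply/implyP => cca; apply/negP => cA.
  have : c \in A :\ a by rewrite in_setD1 cA andbT; apply/eqP => ec; subst c; rewrite covers_irr in cca.
  by move=> /(H c a cca); rewrite in_setD1 eqxx.
rewrite !in_setD1 => /andP[xa xA]; rewrite (fA x y cxy xA) andbT.
by apply/eqP => ey; subst y; move/implyP: (H x) => /(_ cxy); rewrite xA.
Qed.

Lemma filtU1D1 A b d : filt A -> filt (A :\ b) -> b \in A -> d \in AddS A ->
  filt (d |: (A :\ b)) = ~~ covers d b.
Proof.
move=> fA fAb bA; rewrite inE => /andP[dA fdA].
apply/filtP/idP => [H|ncdb x y cxy].
  apply/negP => cdb; have := H d b cdb (setU11 _ _).
  rewrite in_setU1 in_setD1 eqxx /= orbF => /eqP eb; subst b; by rewrite bA in dA.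
rewrite !in_setU1 => /orP[/eqP xd|xAb].
  subst x; move/filtP: fdA => /(_ d y cxy (setU11 _ _)); rewrite in_setU1 => /orP[/eqP yd|yA].
    by subst y; rewrite covers_irr in cxy.
  rewrite in_setD1 yA andbT; apply/orP; right; apply/eqP => yb; subst y; by rewrite cxy in ncdb.
by move/filtP: fAb => /(_ x y cxy xAb) ->; rewrite orbT.
Qed.

Lemma AddS_notin A d : d \in AddS A -> d \notin A.
Proof. by rewrite inE => /andP[]. Qed.

Lemma goodS_alt A : goodS A <->
  filt A /\ (forall a, a \in A -> filt (A :\ a) -> exists2 d, d \in AddS A & covers d a).
Proof.
rewrite /goodS; split.
  move=> /andP[fA /forallP H]; split => // a aA fAa.
  have : a \notin AddS A by apply/negP => /AddS_notin; rewrite aA.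
  move/implyP: (H a) => H' /H'; rewrite /cubeok fAa /=.
  have -> : [disjoint A :\ a & a |: AddS A].
    rewrite -setI_eq0; apply/eqP/setP => x; rewrite !inE.
    case: (eqVneq x a) => //= _; case: (x \in A) => //=; rewrite andbF //.
  move=> /=; rewrite negb_forall => /existsP[d]; rewrite negb_imply => /andP[].
  rewrite in_setU1 => /orP[/eqP -> |dAdd]; first by rewrite setD1K // fA.
  by rewrite filtU1D1 // negbK => cda; exists d.
move=> [fA H]; rewrite fA /=; apply/forallP => b; apply/implyP => bAdd.
apply/negP => /and3P[fAb _ /forallP Hd].
case: (boolP (b \in A)) => bA.
  have [d dAdd cdb] := H b bA fAb.
  by move/implyP: (Hd d); rewrite in_setU1 dAdd orbT filtU1D1 // cdb => /(_ isT).
move/implyP: (Hd b); rewrite setU11 => /(_ isT).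
have -> : A :\ b = A by apply/setP => x; rewrite in_setD1; case: eqP => // ->; rewrite (negbTE bA).
by move=> fbA; move: bAdd; rewrite inE bA fbA.
Qed.

Lemma goodS_bits A : goodS A = goodL (bits A).
Proof.
rewrite /goodL size_bits; apply/idP/idP.
  move/goodS_alt => [fA H]; apply/allP => a; rewrite mem_iota add0n => /andP[_ ha].
  have fA' := fA; rewrite filt_bits in fA'; move/allP: fA' => /(_ a); rewrite mem_iota add0n ha.
  move=> /(_ isT) fa; rewrite /condG fa /=; apply/implyP => Xa; apply/implyP => low.
  have aA : Ordinal ha \in A by rewrite -nth_bits.
  have fAa : filt (A :\ Ordinal ha).
    rewrite filtD1 //; apply/forallP => c; apply/implyP => cca.
    by move/(low_all _ ha): low => /(_ c (ltn_ord c) cca); rewrite nth_bits.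
  have [d dAdd cda] := H _ aA fAa.
  by apply/(ex_add _ ha); exists d => //; rewrite cda -AddS_mem ?dAdd.
move=> /allP H.
have fA : filt A.
  by rewrite filt_bits; apply/allP => a ha; move: (H a ha) => /andP[].
apply/goodS_alt; split => // a aA; rewrite filtD1 // => /forallP Hc.
move: (H a); rewrite mem_iota add0n ltn_ord => /(_ isT) /andP[_].
rewrite nth_bits aA /= => /implyP Himp.
have low : lowG cu cd (Xb A) n a.
  apply/(low_all _ (ltn_ord a)) => c hc cca.
  by rewrite -[c]/(nat_of_ord (Ordinal hc)) nth_bits; move/implyP: (Hc (Ordinal hc)); apply.
move: (Himp low) => /(ex_add _ (ltn_ord a)) [d hd /andP[cda addd]].
by exists (Ordinal hd) => //; rewrite AddS_mem.
Qed.

End SetLevel.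

Section Cube.
Variable n : nat.
Implicit Types A B D X Y Z W : {set 'I_n}.

Definition symd X Y := [set x | (x \in X) (+) (x \in Y)].

Lemma symd_sym X Y : symd X Y = symd Y X.
Proof. by apply/setP => x; rewrite !inE addbC. Qed.

Lemma symd1P X Y a : symd X Y = [set a] <-> forall x, (x \in X) (+) (x \in Y) = (x == a).
Proof.
split => [/setP h x|h]; first by move: (h x); rewrite !inE.
by apply/setP => x; rewrite !inE h.
Qed.

Lemma Omega_adj_symd X Y : Omega_adj X Y = (#|symd X Y| == 1).
Proof.
apply/idP/idP.
  case/orP => /existsP[a /andP[aX /eqP EY]]; apply/cards1P; exists a; apply/symd1P; move=> x.
    rewrite EY in_setD1; case: (eqVneq x a) => [->|] /=; first by rewrite aX.
    by case: (x \in X).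
  rewrite EY in_setD1; case: (eqVneq x a) => [->|] /=; first by rewrite aX.
  by case: (x \in Y).
move/cards1P => [a /symd1P h]; have := h a; rewrite eqxx /Omega_adj.
case aX: (a \in X) => /= aY.
  apply/orP; left; apply/existsP; exists a; rewrite aX /=; apply/eqP/setP => x.
  rewrite in_setD1; move: (h x); case: (eqVneq x a) => [->|_] /=; first by move: aY; case: (a \in Y).
  by case: (x \in X); case: (x \in Y).
apply/orP; right; apply/existsP; exists a; rewrite aY /=; apply/eqP/setP => x.
rewrite in_setD1; move: (h x); case: (eqVneq x a) => [->|_] /=; first by rewrite aX.
by case: (x \in X); case: (x \in Y).
Qed.

Lemma isFilter_filt X : isFilter X = filt X.
Proof.
apply/forallP/filtP => [H a b cab aX|H a].
  by move/forallP: (H a) => /(_ b); rewrite aX /Xi_le connect1.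
apply/forallP => b; apply/implyP => /andP[aX /connectP[p pth ->]].
by elim: p a pth aX => //= c p IH a /andP[cac pth] aX; apply: IH pth (H a c cac aX).
Qed.

Lemma symd_inj X Y Y' : symd X Y = symd X Y' -> Y = Y'.
Proof.
move=> /setP h; apply/setP => x; move: (h x); rewrite !inE.
by case: (x \in X); case: (x \in Y); case: (x \in Y').
Qed.

Lemma square X Y Z W a b c c' : symd X Y = [set a] -> symd X Z = [set b] -> a != b ->
  symd Y W = [set c] -> symd Z W = [set c'] -> W != X -> c = b.
Proof.
move=> /symd1P h1 /symd1P h2 ab /symd1P h3 /symd1P h4 WX.
have E1 x : (x \in X) (+) (x \in W) = (x == a) (+) (x == c).
  by rewrite -h1 -h3; case: (x \in X); case: (x \in Y); case: (x \in W).
have E2 x : (x \in X) (+) (x \in W) = (x == b) (+) (x == c').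
  by rewrite -h2 -h4; case: (x \in X); case: (x \in Z); case: (x \in W).
have ca : c != a.
  apply/eqP => ca; subst c; case/eqP: WX; apply/setP => x.
  by move: (E1 x); rewrite addbb; case: (x \in X); case: (x \in W).
have e := E2 c; rewrite E1 eqxx (negbTE ca) /= in e.
case: (eqVneq c b) => // cb; rewrite (negbTE cb) /= in e.
move/esym/eqP: e => cc'; subst c'.
have e' := E2 a; rewrite E1 eqxx (negbTE ab) /= in e'.
by move: e'; case: (a == c).
Qed.

Definition fl k (u : {ffun 'I_k -> bool}) (i : 'I_k) : {ffun 'I_k -> bool} := [ffun j => u j (+) (j == i)].

Lemma flK k (u : {ffun 'I_k -> bool}) i : fl (fl u i) i = u.
Proof. by apply/ffunP => j; rewrite !ffunE addbK. Qed.

Lemma fl_adj k (u : {ffun 'I_k -> bool}) i : cube_adj u (fl u i).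
Proof.
apply/cards1P; exists i; apply/setP => j; rewrite !inE ffunE.
by case: (u j); case: (j == i).
Qed.

Lemma fl_adj2 k (u : {ffun 'I_k -> bool}) i j : i != j -> cube_adj (fl u i) (fl (fl u j) i).
Proof.
move=> ij; apply/cards1P; exists j; apply/setP => l; rewrite !inE !ffunE.
by case: (u l); case: (l == i); case: (l == j).
Qed.

Section Inv.
Variables (k : nat) (f : {ffun {ffun 'I_k -> bool} -> {set 'I_n}}).
Hypotheses (finj : injective f) (fadj : forall u v, Omega_adj (f u) (f v) = cube_adj u v).

Lemma adj_ex (u v : {ffun 'I_k -> bool}) : cube_adj u v -> exists a, symd (f u) (f v) = [set a].
Proof. by rewrite -fadj Omega_adj_symd => /cards1P. Qed.

Definition z0 : {ffun 'I_k -> bool} := [ffun _ => false].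

Lemma ex_d i : exists a, symd (f z0) (f (fl z0 i)) == [set a].
Proof. by have [a ha] := adj_ex (fl_adj z0 i); exists a; apply/eqP. Qed.

Definition d i := xchoose (ex_d i).

Lemma Hd i : symd (f z0) (f (fl z0 i)) = [set d i].
Proof. by apply/eqP; exact: xchooseP (ex_d i). Qed.

Lemma dinj : injective d.
Proof.
move=> i j dij; have := Hd i; rewrite dij -(Hd j) => /symd_inj /finj /ffunP /(_ i).
by rewrite !ffunE eqxx /= => /esym/eqP.
Qed.

Definition wt (u : {ffun 'I_k -> bool}) := #|[set j | u j]|.

Lemma wt0 (u : {ffun 'I_k -> bool}) : wt u = 0 -> u = z0.
Proof.
move=> /eqP; rewrite cards_eq0 => /eqP h; apply/ffunP => j; rewrite ffunE.
apply/negbTE/negP => uj; have : j \in [set j | u j] by rewrite inE.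
by rewrite h inE.
Qed.

Lemma wt_step (u : {ffun 'I_k -> bool}) j : u j -> wt (fl u j) < wt u.
Proof.
move=> uj; rewrite /wt (cardsD1 j [set j | u j]) inE uj add1n ltnS.
apply: subset_leq_card; apply/subsetP => l; rewrite !inE ffunE.
by case: (eqVneq l j) => [->|_] /=; rewrite ?uj ?addbF.
Qed.

Lemma mainP m (u : {ffun 'I_k -> bool}) : wt u <= m -> forall i, symd (f u) (f (fl u i)) = [set d i].
Proof.
elim: m u => [|m IH] u hu i.
  by rewrite leqn0 in hu; rewrite (wt0 (eqP hu)) Hd.
case: (leqP (wt u) m) => hum; first exact: IH.
have : [set j | u j] != set0 by rewrite -card_gt0 (leq_ltn_trans _ hum).
case/set0Pn => j; rewrite inE => uj.
set u' := fl u j.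
have hu' : wt u' <= m by rewrite -ltnS (leq_trans (wt_step uj) hu).
have Eu : fl u' j = u by rewrite flK.
case: (eqVneq i j) => [->|ij].
  by rewrite -/u' symd_sym -Eu IH.
have [c hc] := adj_ex (fl_adj u i).
have [c' hc'] : exists c', symd (f (fl u' i)) (f (fl u i)) = [set c'].
  by apply: adj_ex; rewrite -Eu; exact: fl_adj2.
have WX : f (fl u i) != f u'.
  apply/eqP => /finj /ffunP /(_ i); rewrite !ffunE eqxx (negbTE ij).
  by case: (u i).
have dji : d j != d i by apply/eqP => /dinj ji; rewrite ji eqxx in ij.
have h1 := IH u' hu' j; rewrite Eu in h1.
by rewrite hc (square h1 (IH u' hu' i) dji hc hc' WX).
Qed.

Lemma img_fl (v : {ffun 'I_k -> bool}) j x :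
  (x \in d @: [set i | fl v j i]) = (x \in d @: [set i | v i]) (+) (x == d j).
Proof.
case: (pickP (fun i => d i == x)) => [i0 /eqP <-|hx].
  by rewrite !mem_imset; [rewrite !inE ffunE (inj_eq dinj) | exact: dinj | exact: dinj].
have nx S : (x \in d @: S) = false.
  by apply/negbTE/imsetP => -[i _ ex]; move: (hx i); rewrite ex eqxx.
by rewrite !nx; move: (hx j); rewrite eq_sym => ->.
Qed.

Lemma mainQ m (u : {ffun 'I_k -> bool}) : wt u <= m -> forall x, (x \in f u) = (x \in f z0) (+) (x \in d @: [set i | u i]).
Proof.
elim: m u => [|m IH] u hu x.
  rewrite leqn0 in hu; rewrite (wt0 (eqP hu)).
  have -> : [set i | z0 i] = set0 by apply/setP => i; rewrite !inE ffunE.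
  by rewrite imset0 inE addbF.
case: (leqP (wt u) m) => hum; first exact: IH.
have : [set j | u j] != set0 by rewrite -card_gt0 (leq_ltn_trans _ hum).
case/set0Pn => j; rewrite inE => uj.
set u' := fl u j.
have hu' : wt u' <= m by rewrite -ltnS (leq_trans (wt_step uj) hu).
have Eu : fl u' j = u by rewrite flK.
have /symd1P h := mainP hu' j; move: (h x); rewrite Eu => hx.
have -> : (x \in f u) = (x \in f u') (+) (x == d j).
  by rewrite -hx; case: (x \in f u'); case: (x \in f u).
by rewrite IH // -Eu img_fl addbA.
Qed.

Lemma mainQ' (u : {ffun 'I_k -> bool}) x : (x \in f u) = (x \in f z0) (+) (x \in d @: [set i | u i]).
Proof. exact: mainQ (leqnn _) x. Qed.

Lemma inv_main (S : {set {set 'I_n}}) : (forall X, X \in S -> filt X) -> S = [set f u | u : {ffun 'I_k -> bool}] ->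
  exists A D, [/\ cubeok A D, #|D| = k & S = cubeset A D].
Proof.
move=> HS HSf; set D := d @: [set: 'I_k]; set A := f z0 :\: D.
have inD x : (x \in D) = [exists i, d i == x].
  apply/imsetP/existsP => [[i _ ->]|[i /eqP <-]]; first by exists i.
  by exists i.
have sub S' x : x \in d @: S' -> x \in D by case/imsetP => i _ ->; apply: imset_f.
have ES : S = cubeset A D.
  rewrite HSf; apply/setP => X; rewrite inE; apply/imsetP/andP.
    move=> [u _ ->]; split; apply/subsetP => x.
      by rewrite inE (mainQ' u) => /andP[xD ->]; case: (boolP (x \in d @: _)) => // /sub; rewrite (negbTE xD).
    rewrite (mainQ' u) inE in_setD; case: (boolP (x \in D)) => //= xD.
    have -> : (x \in d @: [set i | u i]) = false by apply/negbTE/negP => /sub; rewrite (negbTE xD).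
    by rewrite addbF orbF.
  move=> [AX XAD]; exists [ffun i => (d i \in X) (+) (d i \in f z0)] => //.
  apply/setP => x; rewrite mainQ'; case: (boolP (x \in D)) => xD.
    move: xD; rewrite inD => /existsP[i /eqP <-]; rewrite mem_imset; last exact: dinj.
    by rewrite inE ffunE; case: (d i \in X); case: (d i \in f z0).
  have -> : (x \in d @: [set i | [ffun i => (d i \in X) (+) (d i \in f z0)] i]) = false.
    by apply/negbTE/negP => /sub; rewrite (negbTE xD).
  rewrite addbF; apply/idP/idP => [xX|xf].
    by move: (subsetP XAD x xX); rewrite !inE (negbTE xD) orbF => /andP[].
  by apply: (subsetP AX); rewrite inE xD.
exists A, D; split => //.
- apply/and3P; split.
  + by apply: HS; rewrite ES inE subxx subsetUl.
  + by rewrite -setI_eq0; apply/eqP/setP => x; rewrite !inE; case: (x \in D); rewrite ?andbF.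
  + apply/forallP => e; apply/implyP => eD; apply: HS; rewrite ES inE subsetUr /=.
    by apply/subsetP => x; rewrite !inE => /orP[/eqP ->|->]; rewrite ?eD ?orbT.
- by rewrite card_imset; [rewrite cardsT card_ord | exact: dinj].
Qed.
End Inv.

End Cube.

Section Fwd.
Variable n : nat.
Implicit Types A B D X Y : {set 'I_n}.

Lemma filt_cubeset A D X : cubeok A D -> X \in cubeset A D -> filt X.
Proof.
move=> /and3P[/filtP fA _ /forallP fD]; rewrite inE => /andP[AX XAD].
apply/filtP => a b cab aX; move: (subsetP XAD a aX); rewrite inE => /orP[aA|aD].
  by apply: (subsetP AX); apply: fA cab aA.
move/implyP: (fD a) => /(_ aD) /filtP /(_ a b cab (setU11 _ _)); rewrite in_setU1 => /orP[/eqP ba|bA].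
  by subst b; rewrite covers_irr in cab.
by apply: (subsetP AX).
Qed.

Lemma cube_of_pair k A D : cubeok A D -> #|D| = k -> @isInducedCube n k (cubeset A D).
Proof.
move=> ok hk; have ok' := ok; move/and3P: ok' => [fA dis fD].
pose e (i : 'I_k) : 'I_n := enum_val (cast_ord (esym hk) i).
have einj : injective e by move=> i j /enum_val_inj /cast_ord_inj.
have eD i : e i \in D by apply: enum_valP.
have eA i : e i \notin A by apply/negP => eiA; have := eD i; rewrite (disjointFr dis eiA).
have De x : x \in D -> exists i, e i = x.
  move=> xD; exists (cast_ord hk (enum_rank_in xD x)).
  by rewrite /e cast_ordK enum_rankK_in.
have subD (S' : {set 'I_k}) x : x \in e @: S' -> x \in D by case/imsetP => i _ ->.
pose f := [ffun u : {ffun 'I_k -> bool} => A :|: e @: [set i | u i]].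
have fe u i : (e i \in f u) = u i by rewrite ffunE in_setU (negbTE (eA i)) mem_imset // inE.
apply/andP; split.
  apply/forallP => X; apply/implyP => XS; rewrite isFilter_filt; exact: filt_cubeset ok XS.
apply/existsP; exists f; apply/and3P; split.
- apply/injectiveP => u v fuv; apply/ffunP => i; by rewrite -!fe fuv.
- apply/eqP/setP => X; rewrite inE; apply/andP/imsetP.
    move=> [AX XAD]; exists [ffun i => e i \in X] => //; apply/setP => x.
    case: (boolP (x \in A)) => xA.
      by rewrite (subsetP AX x xA) ffunE in_setU xA.
    case: (boolP (x \in D)) => xD.
      by have [i <-] := De x xD; rewrite fe ffunE.
    rewrite ffunE in_setU (negbTE xA) /=; apply/idP/idP => [xX|/subD]; last by rewrite (negbTE xD).
    by move: (subsetP XAD x xX); rewrite in_setU (negbTE xA) (negbTE xD).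
  move=> [u _ ->]; rewrite ffunE; split; first exact: subsetUl.
  by apply: setUS; apply/subsetP => x /subD.
- apply/forallP => u; apply/forallP => v; apply/eqP.
  rewrite Omega_adj_symd /cube_adj.
  have -> : symd (f u) (f v) = e @: [set i | u i != v i].
    apply/setP => x; rewrite inE; case: (boolP (x \in D)) => xD.
      have [i ei] := De x xD; subst x; rewrite !fe (mem_imset _ _ einj) inE.
      by case: (u i); case: (v i).
    have nA : forall w, (x \in f w) = (x \in A).
      by move=> w; rewrite ffunE in_setU; case: (boolP (x \in e @: _)) => [/subD|]; rewrite ?(negbTE xD) ?orbF.
    rewrite !nA addbb; apply/esym/negbTE/negP => /subD; by rewrite (negbTE xD).
  by rewrite card_imset.
Qed.

Lemma cubeset_sub A D A' D' : cubeset A D \subset cubeset A' D' ->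
  A' \subset A /\ A :|: D \subset A' :|: D'.
Proof.
move=> /subsetP H.
have := H A; rewrite !inE subxx subsetUl => /(_ isT) /andP[-> _].
have := H (A :|: D); rewrite !inE subsetUl subxx => /(_ isT) /andP[_ ->]; by [].
Qed.

Lemma cubeset_subI A D A' D' : A' \subset A -> A :|: D \subset A' :|: D' ->
  cubeset A D \subset cubeset A' D'.
Proof.
move=> h1 h2; apply/subsetP => X; rewrite !inE => /andP[h3 h4].
by rewrite (subset_trans h1 h3) (subset_trans h4 h2).
Qed.

Lemma cubeok_AddS A : filt A -> cubeok A (AddS A).
Proof.
move=> fA; apply/and3P; split => //.
  by rewrite -setI_eq0; apply/eqP/setP => x; rewrite !inE; case: (x \in A); rewrite ?andbF.
by apply/forallP => d; apply/implyP; rewrite inE => /andP[].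
Qed.

Lemma cubeok_sub_AddS A D : cubeok A D -> D \subset AddS A.
Proof.
move=> /and3P[_ dis /forallP fD]; apply/subsetP => d dD; rewrite inE.
move/implyP: (fD d) => /(_ dD) ->; rewrite andbT.
by apply/negP => dA; rewrite (disjointFr dis dA) in dD.
Qed.

Lemma max_char k (S : {set {set 'I_n}}) : @isMaximalCube n k S <->
  exists A, [/\ goodS A, #|AddS A| = k & S = cubeset A (AddS A)].
Proof.
split.
  move=> /andP[HS /existsPn noT].
  move: (HS) => /andP[/forallP HF /existsP[f /and3P[/injectiveP finj /eqP HSf /forallP Hadj]]].
  have fadj : forall u v, Omega_adj (f u) (f v) = cube_adj u v.
    by move=> u v; move/forallP: (Hadj u) => /(_ v) /eqP.
  have HF' : forall X, X \in S -> filt X.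
    by move=> X XS; move/implyP: (HF X) => /(_ XS); rewrite isFilter_filt.
  have [A [D [ok hk ES]]] := inv_main finj fadj HF' HSf.
  have ext : forall A' D', cubeok A' D' -> #|D'| = k.+1 -> A' \subset A ->
      A :|: D \subset A' :|: D' -> False.
    move=> A' D' ok' hk' h1 h2; move: (noT (cubeset A' D')).
    by rewrite cube_of_pair // ES cubeset_subI.
  have fA : filt A by case/and3P: ok.
  have DAdd : D = AddS A.
    apply/eqP; rewrite eqEsubset cubeok_sub_AddS //=.
    apply/subsetP => b bAdd; apply/negPn/negP => bD.
    apply: (ext A (b |: D)); rewrite ?subxx //.
    - apply/and3P; split => //.
        case/and3P: ok => _ dis _; move: bAdd; rewrite inE => /andP[bA _].
        rewrite -setI_eq0; apply/eqP/setP => x; rewrite !inE.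
        case: (eqVneq x b) => [->|_] /=; first by rewrite (negbTE bA) .
        by case: (boolP (x \in A)) => // xA; rewrite (disjointFr dis xA).
      apply/forallP => d; apply/implyP; rewrite in_setU1 => /orP[/eqP ->|dD].
        by move: bAdd; rewrite inE => /andP[].
      by case/and3P: ok => _ _ /forallP /(_ d) /implyP /(_ dD).
    - by rewrite cardsU1 bD hk.
    - by apply: setUS; apply: subsetUr.
  exists A; split => //; last by rewrite -DAdd.
    apply/andP; split => //; apply/forallP => b; apply/implyP => bAdd; apply/negP => okb.
    apply: (ext (A :\ b) (b |: AddS A)) => //.
    - by rewrite cardsU1 bAdd -DAdd hk.
    - exact: subsetDl.
    - apply/subsetP => x; rewrite DAdd !inE; case: (eqVneq x b) => //= _.
  by rewrite -DAdd.
move=> [A [gA hk ES]]; move: (gA) => /andP[fA /forallP gB].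
apply/andP; split; first by rewrite ES; apply: cube_of_pair => //; exact: cubeok_AddS.
apply/existsPn => T; apply/negP => /andP[/andP[/forallP HF /existsP[f /and3P[/injectiveP finj /eqP HSf /forallP Hadj]]] ST].
have fadj : forall u v, Omega_adj (f u) (f v) = cube_adj u v.
  by move=> u v; move/forallP: (Hadj u) => /(_ v) /eqP.
have HF' : forall X, X \in T -> filt X.
  by move=> X XS; move/implyP: (HF X) => /(_ XS); rewrite isFilter_filt.
have [A' [D' [ok' hk' ET]]] := inv_main finj fadj HF' HSf.
move: ST; rewrite ES ET => /cubeset_sub [h1 h2].
set D := AddS A in gB hk h2.
have dis' : [disjoint A' & D'] by case/and3P: ok'.
have DA x : x \in D -> x \notin A by rewrite inE => /andP[].
have DD' : D \subset D'.
  apply/subsetP => x xD; move: (subsetP h2 x); rewrite !in_setU xD orbT => /(_ isT) /orP[xA'|//].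
  by move: (subsetP h1 x xA'); rewrite (negbTE (DA x xD)).
have : ~~ (D' \subset D).
  by apply/negP => /subset_leq_card; rewrite hk' hk ltnn.
case/subsetPn => b bD' bD.
have ED' : D' = b |: D.
  apply/eqP; rewrite eq_sym eqEcard hk' cardsU1 bD hk leqnn andbT.
  by apply/subsetP => x; rewrite in_setU1 => /orP[/eqP ->|/(subsetP DD')].
have EA' : A' = A :\ b.
  apply/setP => x; rewrite in_setD1; case: (eqVneq x b) => [->|xb] /=.
    by apply/negP => bA'; rewrite (disjointFr dis' bA') in bD'.
  apply/idP/idP => [/(subsetP h1)//|xA].
  move: (subsetP h2 x); rewrite !inE xA => /(_ isT) /orP[//|xD'].
  by move: xD'; rewrite ED' in_setU1 (negbTE xb) /= => /DA; rewrite xA.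
move/implyP: (gB b) => /(_ bD); rewrite -EA' -ED' ok'; by [].
Qed.

End Fwd.

Lemma bits_inj n : injective (@bits n).
Proof.
move=> A B hAB; apply/setP => i; by rewrite -!nth_bits hAB.
Qed.

Lemma bits_of n (l : seq bool) : size l = n -> bits [set i : 'I_n | nth false l i] = l.
Proof.
move=> hl; apply: (@eq_from_nth _ false); first by rewrite size_bits.
move=> j; rewrite size_bits => hj.
by rewrite -[j]/(nat_of_ord (Ordinal hj)) nth_bits inE.
Qed.

Lemma card_bits n (P : pred (seq bool)) :
  #|[set A : {set 'I_n} | P (bits A)]| = count P (lists n).
Proof.
rewrite cardE -(size_map (@bits n)) -size_filter; apply: perm_size.
apply: uniq_perm.
- by rewrite (map_inj_uniq (@bits_inj n)) enum_uniq.
- by rewrite filter_uniq // uniq_lists.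
move=> l; rewrite mem_filter mem_lists; apply/mapP/andP.
  by move=> [A]; rewrite mem_enum inE => PA ->; rewrite size_bits.
move=> [Pl /eqP hl]; exists [set i : 'I_n | nth false l i]; last by rewrite bits_of.
by rewrite mem_enum inE bits_of.
Qed.

Lemma h_G n k : h n k = G n k.
Proof.
rewrite /h.
have -> : [set S : {set {set 'I_n}} | @isMaximalCube n k S] =
    [set cubeset A (AddS A) | A in [set A : {set 'I_n} | goodS A && (#|AddS A| == k)]].
  apply/setP => S; rewrite inE; apply/idP/imsetP.
    move/max_char => [A [gA hk ->]]; exists A => //; by rewrite inE gA hk eqxx.
  move=> [A]; rewrite inE => /andP[gA /eqP hk] ->; apply/max_char; by exists A.
rewrite card_in_imset; last first.
  move=> A B _ _ E.
  have hA : A \in cubeset A (AddS A) by rewrite inE subxx subsetUl.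
  have hB : B \in cubeset B (AddS B) by rewrite inE subxx subsetUl.
  rewrite E inE in hA; rewrite -E inE in hB.
  by apply/eqP; rewrite eqEsubset; case/andP: hA => -> _; case/andP: hB => ->.
rewrite /G -card_bits; apply: eq_card => A; rewrite !inE /Pk -goodS_bits.
case: (boolP (goodS A)) => //= gA; rewrite card_AddS //; by case/andP: gA.
Qed.

Import GRing.Theory.
Local Open Scope ring_scope.
Import GRing.Theory.
Local Open Scope ring_scope.

Lemma sum_if_eq (m a : nat) (F : nat -> int) :
  \sum_(i < m) (if (i == a :> nat) then F i else 0) = if (a < m)%N then F a else 0.
Proof.
case: ltnP => ha.
  rewrite (bigD1 (Ordinal ha)) //= eqxx big1 ?addr0 // => i /eqP hi.
  by case: eqP => // hia; case: hi; apply: val_inj.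
by rewrite big1 // => i _; case: eqP => // hia; move: (ltn_ord i); rewrite hia ltnNge ha.
Qed.

Definition dl (a b : nat) : fps2 := fun i j => if (i == a) && (j == b) then 1 else 0.

Lemma mul_dl a b g n k : fps2_mul (dl a b) g n k =
  if (a <= n)%N && (b <= k)%N then g (n - a)%N (k - b)%N else 0.
Proof.
rewrite /fps2_mul.
rewrite (eq_bigr (fun i : 'I_n.+1 => if (i == a :> nat) then (if (b < k.+1)%N then g (n - i)%N (k - b)%N else 0) else 0)).
  by rewrite (sum_if_eq _ _ (fun i => if (b < k.+1)%N then g (n - i)%N (k - b)%N else 0)) !ltnS; case: (a <= n)%N.
move=> i _; case: eqP => hi /=.
  rewrite -(sum_if_eq _ _ (fun j => g (n - i)%N (k - j)%N)); apply: eq_bigr => j _.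
  by rewrite /dl hi eqxx /=; case: eqP => _; rewrite ?mul1r ?mul0r.
by rewrite big1 // => j _; rewrite /dl; move/eqP/negbTE: hi => ->; rewrite mul0r.
Qed.

Lemma mul2_ext f f' g n k : (forall i j, f i j = f' i j) -> fps2_mul f g n k = fps2_mul f' g n k.
Proof. by move=> h; apply: eq_bigr => i _; apply: eq_bigr => j _; rewrite h. Qed.

Lemma mul2_add f1 f2 g n k : fps2_mul (fps2_add f1 f2) g n k = fps2_mul f1 g n k + fps2_mul f2 g n k.
Proof.
rewrite /fps2_mul -big_split; apply: eq_bigr => i _; rewrite -big_split; apply: eq_bigr => j _.
by rewrite /fps2_add mulrDl.
Qed.

Lemma mul2_sub f1 f2 g n k : fps2_mul (fps2_sub f1 f2) g n k = fps2_mul f1 g n k - fps2_mul f2 g n k.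
Proof.
rewrite /fps2_mul -sumrB; apply: eq_bigr => i _; rewrite -sumrB; apply: eq_bigr => j _.
by rewrite /fps2_sub mulrBl.
Qed.

Lemma mulX g n k : fps2_mul fps2_X g n k = if (1 <= k)%N then g n (k - 1)%N else 0.
Proof. by rewrite (mul_dl 0 1) subn0. Qed.
Lemma mulY g n k : fps2_mul fps2_Y g n k = if (1 <= n)%N then g (n - 1)%N k else 0.
Proof. by rewrite (mul_dl 1 0) subn0 andbT. Qed.

Lemma D_eq i j : fps2_sub (fps2_const 1)
          (fps2_mul fps2_X (fps2_mul fps2_Y (fps2_mul fps2_Y
             (fps2_add (fps2_const 1) fps2_Y)))) i j =
  dl 0 0 i j - dl 2 1 i j - dl 3 1 i j.
Proof.
rewrite /fps2_sub mulX mulY mulY /fps2_add /fps2_const /fps2_Y /dl.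
by case: i => [|[|[|[|i]]]]; case: j => [|[|j]]; rewrite /= ?subr0 ?sub0r ?addr0 ?add0r.
Qed.


Lemma Hp_eq a b : fps2_add Hser
          (fps2_add (fps2_mul (fps2_sub (fps2_const 1) fps2_X) fps2_Y)
                    (fps2_const 1)) a b =
  (G a b)%:Z + (if a == 1%N then (b == 0%N)%:Z - (b == 1%N)%:Z else 0) + ((a == 0%N) && (b == 0%N))%:Z.
Proof.
rewrite /fps2_add /Hser h_G mul2_sub mulX (mul_dl 0 0) /fps2_const /fps2_Y /=.
rewrite !subn0.
by case: a => [|[|a]]; case: b => [|[|b]]; rewrite /= ?subr0 ?addr0.
Qed.

Lemma part1 n k : fps2_mul
       (fps2_sub (fps2_const 1)
          (fps2_mul fps2_X (fps2_mul fps2_Y (fps2_mul fps2_Y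
             (fps2_add (fps2_const 1) fps2_Y)))))
       (fps2_add Hser
          (fps2_add (fps2_mul (fps2_sub (fps2_const 1) fps2_X) fps2_Y)
                    (fps2_const 1)))
       n k
     = fps2_add (fps2_const 2) fps2_Y n k.
Proof.
rewrite (@mul2_ext _ (fps2_sub (fps2_sub (dl 0 0) (dl 2 1)) (dl 3 1))); last exact: D_eq.
rewrite !mul2_sub !mul_dl !Hp_eq /fps2_add /fps2_const /fps2_Y.
have Gr : forall n k, G n.+4.+1 k.+1 = (G n.+3 k + G n.+2 k)%N.
  by move=> m j; move: (G_rec_all m j); rewrite !addnS !addn0.
have Gz : forall n, G n.+4.+1 0 = 0%N.
  by move=> m; move: (G_zero_all m); rewrite !addnS !addn0.
case: n => [|[|[|[|[|n]]]]]; case: k => [|k]; rewrite /= ?subSS ?subn0 ?G0 ?G1 ?G2 ?G3 ?G4 ?Gr ?Gz.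
all: lia.
Qed.

Definition dl1 (a : nat) : fps := fun i => if i == a then 1 else 0.

Lemma mul1_dl a g n : fps_mul (dl1 a) g n = if (a <= n)%N then g (n - a)%N else 0.
Proof.
rewrite /fps_mul (eq_bigr (fun i : 'I_n.+1 => if (i == a :> nat) then g (n - a)%N else 0)).
  by rewrite (sum_if_eq _ _ (fun _ => g (n - a)%N)) ltnS.
by move=> i _; rewrite /dl1; case: eqP => [->|_]; rewrite ?mul1r ?mul0r.
Qed.

Lemma mul1_ext f f' g n : (forall i, f i = f' i) -> fps_mul f g n = fps_mul f' g n.
Proof. by move=> hf; apply: eq_bigr => i _; rewrite hf. Qed.

Lemma mul1_sub f1 f2 g n : fps_mul (fps_sub f1 f2) g n = fps_mul f1 g n - fps_mul f2 g n.
Proof. by rewrite /fps_mul -sumrB; apply: eq_bigr => i _; rewrite /fps_sub mulrBl. Qed.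

Lemma mul1X g n : fps_mul fps_X g n = if (1 <= n)%N then g (n - 1)%N else 0.
Proof. exact: (mul1_dl 1). Qed.

Lemma mul1C c g n : fps_mul (fps_const c) g n = c * g n.
Proof.
rewrite /fps_mul (eq_bigr (fun i : 'I_n.+1 => if (i == 0%N :> nat) then c * g n else 0)).
  by rewrite (sum_if_eq _ _ (fun _ => c * g n)).
by move=> i _; rewrite /fps_const; case: eqP => [->|_]; rewrite ?subn0 ?mul0r.
Qed.

Lemma part2 n : fps_mul
       (fps_sub (fps_sub (fps_const 1) (fps_mul fps_X fps_X))
                (fps_mul fps_X (fps_mul fps_X fps_X)))
       Pser n
     = fps_add (fps_const 1)
         (fps_add (fps_mul (fps_const 2) fps_X)
                  (fps_mul (fps_const 2) (fps_mul fps_X fps_X))) n.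
Proof.
rewrite (@mul1_ext _ (fps_sub (fps_sub (dl1 0) (dl1 2)) (dl1 3))); last first.
  move=> i; rewrite /fps_sub !mul1X /fps_const /fps_X /dl1.
  by case: i => [|[|[|[|i]]]]; rewrite /= ?subr0 ?sub0r ?addr0 ?add0r.
rewrite !mul1_sub !mul1_dl /fps_add !mul1C !mul1X /fps_const /fps_X /Pser.
case: n => [|[|[|n]]]; rewrite /= ?subSS ?subn0 //.
rewrite /=; lia.
Qed.

Theorem mainTheorem14 :
  (forall n k : nat,
     fps2_mul
       (fps2_sub (fps2_const 1)
          (fps2_mul fps2_X (fps2_mul fps2_Y (fps2_mul fps2_Y
             (fps2_add (fps2_const 1) fps2_Y)))))
       (fps2_add Hser
          (fps2_add (fps2_mul (fps2_sub (fps2_const 1) fps2_X) fps2_Y)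
                    (fps2_const 1)))
       n k
     = fps2_add (fps2_const 2) fps2_Y n k)
  /\
  (forall n : nat,
     fps_mul
       (fps_sub (fps_sub (fps_const 1) (fps_mul fps_X fps_X))
                (fps_mul fps_X (fps_mul fps_X fps_X)))
       Pser n
     = fps_add (fps_const 1)
         (fps_add (fps_mul (fps_const 2) fps_X)
                  (fps_mul (fps_const 2) (fps_mul fps_X fps_X))) n).
Proof. split; [exact: part1 | exact: part2]. Qed.
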